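(* Let $f:I\to[n]$ and $f':I'\to[n]$ be left active morphisms in $\Delta$ such that the claw $(f,f')$ is compatible, and consider their pullback square in $\Delta$ (with corners $I\cap I'$, $I$, $I'$, $[n]$), which is strongly biCartesian. Then the image of this square under the canonical functor $\Delta\to\Lambda$ is a pushout square in $\Lambda$.
   Context: $\Delta$: simplex category of $[n]=\{0<\dots<n\}$, weakly monotone maps; $f$ left active means $f(0)=0$. $\Lambda$: Connes' cyclic category with canonical functor $\Delta\to\Lambda$, $[n]\mapsto\langle n\rangle=(\mathbb{Z}/(n+1),+1)$, identifying $\Delta$ with the slice $\Lambda_{/\langle0\rangle}$ (forgetful functor). A pair $(f:I\to[n],f':I'\to[n])$ is compatible if (BC1) for each $i\in[n]$ at most one of $f^{-1}\{i\},f'^{-1}\{i\}$ is not a singleton, and (BC2) for each $0<i\le n$ at most one of $f(I),f'(I')$ fails to contain $\{i-1,i\}$. *)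

(* Defs.v *)
From mathcomp Require Import all_boot all_order all_algebra.
Set Implicit Arguments. Unset Strict Implicit. Unset Printing Implicit Defensive.
Import Order.TTheory GRing.Theory Num.Theory.

(** * The simplex category Delta.
    Objects are [n] = {0 < ... < n}, represented by 'I_n.+1;
    a morphism [m] -> [n] is a weakly monotone function 'I_m.+1 -> 'I_n.+1. *)
Definition dmono (m n : nat) (f : 'I_m.+1 -> 'I_n.+1) : Prop :=
  forall x y : 'I_m.+1, (x <= y)%N -> (f x <= f y)%N.

Definition left_active (m n : nat) (f : 'I_m.+1 -> 'I_n.+1) : Prop :=
  nat_of_ord (f ord0) = 0%N.

Definition in_image (m n : nat) (f : 'I_m.+1 -> 'I_n.+1) (j : nat) : bool :=
  [exists x, nat_of_ord (f x) == j].

(** Compatibility of the claw (f, f') : conditions (BC1) and (BC2).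
    "at most one of the two fails" = "at least one of the two holds". *)
Definition compatible (m m' n : nat) (f : 'I_m.+1 -> 'I_n.+1)
    (f' : 'I_m'.+1 -> 'I_n.+1) : Prop :=
  (forall i : 'I_n.+1,
      (#|[pred x | f x == i]| == 1%N) || (#|[pred x | f' x == i]| == 1%N)) /\
  (forall i : 'I_n.+1, (0 < i)%N ->
      (in_image f i.-1 && in_image f i) || (in_image f' i.-1 && in_image f' i)).

Definition delta_pullback (k m m' n : nat)
    (g : 'I_k.+1 -> 'I_m.+1) (g' : 'I_k.+1 -> 'I_m'.+1)
    (f : 'I_m.+1 -> 'I_n.+1) (f' : 'I_m'.+1 -> 'I_n.+1) : Prop :=
  [/\ dmono g, dmono g', (forall x, f (g x) = f' (g' x)) &
   forall (l : nat) (h : 'I_l.+1 -> 'I_m.+1) (h' : 'I_l.+1 -> 'I_m'.+1),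
     dmono h -> dmono h' -> (forall x, f (h x) = f' (h' x)) ->
     exists u : 'I_l.+1 -> 'I_k.+1,
       [/\ dmono u, (forall x, g (u x) = h x), (forall x, g' (u x) = h' x) &
        forall u' : 'I_l.+1 -> 'I_k.+1, dmono u' ->
          (forall x, g (u' x) = h x) -> (forall x, g' (u' x) = h' x) ->
          forall x, u' x = u x]].

(** Model: Lambda = Lambda_infty / Z.  A morphism
    <m> -> <n> is represented by a weakly monotone F : int -> int with
    F (i + (m+1)) = F i + (n+1); two representatives define the same morphism
    iff they differ by a multiple of (n+1).  Composition is composition of
    representatives, identity is the identity. *)
Local Open Scope ring_scope.

Definition lam_hom (m n : nat) (F : int -> int) : Prop :=
  (forall i j : int, i <= j -> F i <= F j) /\
  (forall i : int, F (i + (m.+1)%:Z) = F i + (n.+1)%:Z).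

Definition lam_eq (n : nat) (F G : int -> int) : Prop :=
  exists c : int, forall i : int, G i = F i + c * (n.+1)%:Z.

(** The canonical functor Delta -> Lambda, [m] |-> <m>:
    f is extended periodically, i + q(m+1) |-> f(i) + q(n+1) for i in [m]. *)
Definition lam_of (m n : nat) (f : 'I_m.+1 -> 'I_n.+1) : int -> int :=
  fun i => (nat_of_ord (f (inord (absz (i %% (m.+1)%:Z)%Z))))%:Z
           + (i %/ (m.+1)%:Z)%Z * (n.+1)%:Z.

Definition lam_pushout (a b c d : nat) (p q u v : int -> int) : Prop :=
  [/\ (lam_hom a b p /\ lam_hom a c q), lam_hom b d u, lam_hom c d v,
   lam_eq d (u \o p) (v \o q) &
   forall (e : nat) (x y : int -> int),
     lam_hom b e x -> lam_hom c e y -> lam_eq e (x \o p) (y \o q) ->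
     exists z : int -> int,
       [/\ lam_hom d e z, lam_eq e (z \o u) x, lam_eq e (z \o v) y &
        forall z' : int -> int, lam_hom d e z' ->
          lam_eq e (z' \o u) x -> lam_eq e (z' \o v) y -> lam_eq e z z']].

(* Main.v *)
Require Import Defs.
From mathcomp Require Import all_boot all_order all_algebra.
From mathcomp Require Import zify ring lra.
Set Implicit Arguments. Unset Strict Implicit. Unset Printing Implicit Defensive.
Import Order.TTheory GRing.Theory Num.Theory.
Local Open Scope ring_scope.

Definition ext (N E : nat) (h : int -> int) (j : int) : int :=
  h (j %% N%:Z)%Z + (j %/ N%:Z)%Z * E%:Z.

Lemma extE N E h (r q : int) : 0 <= r < (N.+1)%:Z ->
  ext N.+1 E h (r + q * (N.+1)%:Z) = h r + q * E%:Z.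
Proof.
move=> hr; rewrite /ext [r + _]addrC modzMDl modz_small // divzMDl // divz_small //.
by rewrite addr0.
Qed.

Lemma decomp (M : nat) (i : int) : exists (r : 'I_M.+1) (q : int), i = (r : nat)%:Z + q * (M.+1)%:Z.
Proof.
have h0 := modz_ge0 i (isT : (M.+1)%:Z != 0).
have h1 := ltz_mod i (isT : (M.+1)%:Z != 0).
have hd := divz_eq i (M.+1)%:Z.
case E: (i %% (M.+1)%:Z)%Z h0 h1 hd => [t|t] // _ h1 hd.
have ht : (t < M.+1)%N by [].
exists (Ordinal ht), (i %/ (M.+1)%:Z)%Z => /=.
by rewrite addrC.
Qed.

Lemma hom_shift m n x : lam_hom m n x -> forall i q, x (i + q * (m.+1)%:Z) = x i + q * (n.+1)%:Z.
Proof.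
case=> _ hp.
have pos : forall i (k : nat), x (i + k%:Z * (m.+1)%:Z) = x i + k%:Z * (n.+1)%:Z.
  move=> i; elim=> [|k IH]; first by rewrite !mul0r !addr0.
  have -> : i + (k.+1)%:Z * (m.+1)%:Z = (i + k%:Z * (m.+1)%:Z) + (m.+1)%:Z.
    by rewrite [(k.+1)%:Z]intS; ring.
  by rewrite hp IH [(k.+1)%:Z]intS; ring.
move=> i [k|k]; first exact: pos.
have := pos (i + Negz k * (m.+1)%:Z) k.+1.
have -> : i + Negz k * (m.+1)%:Z + (k.+1)%:Z * (m.+1)%:Z = i.
  by rewrite NegzE; ring.
move=> ->; rewrite NegzE; ring.
Qed.

Lemma step_mono (F : int -> int) : (forall i, F i <= F (i + 1)) ->
  forall i j, i <= j -> F i <= F j.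
Proof.
move=> hs i j hij.
have [d hd] : exists d : nat, j = i + d%:Z.
  exists (absz (j - i)); rewrite gez0_abs ?subr_ge0 //; ring.
rewrite hd; elim: d {hd hij} => [|d IH]; first by rewrite addr0.
apply: (le_trans IH).
have -> : i + (d.+1)%:Z = i + d%:Z + 1 by rewrite [(d.+1)%:Z]intS; ring.
exact: hs.
Qed.

Lemma ext_hom m n h : (forall t : nat, (t < m)%N -> h t%:Z <= h (t.+1)%:Z) ->
  h m%:Z <= h 0 + (n.+1)%:Z -> lam_hom m n (ext m.+1 n.+1 h).
Proof.
move=> hs he; split; last first.
  move=> i; have [r [q ->]] := decomp m i.
  have hr : 0 <= (r : nat)%:Z < (m.+1)%:Z by rewrite ltz_nat ltn_ord.
  have -> : (r : nat)%:Z + q * (m.+1)%:Z + (m.+1)%:Z = (r : nat)%:Z + (q + 1) * (m.+1)%:Z by ring.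
  rewrite !extE //; ring.
apply: step_mono => i; have [r [q ->]] := decomp m i.
have hr : 0 <= (r : nat)%:Z < (m.+1)%:Z by rewrite ltz_nat ltn_ord.
rewrite extE //.
have [rlt|rge] := ltnP r m.
  have -> : (r : nat)%:Z + q * (m.+1)%:Z + 1 = (r.+1 : nat)%:Z + q * (m.+1)%:Z.
    rewrite [(_.+1)%:Z]intS; ring.
  rewrite extE; last by rewrite ltz_nat.
  by rewrite lerD2r hs.
have rm : (r : nat) = m by apply/eqP; rewrite eqn_leq rge -ltnS ltn_ord.
have -> : (r : nat)%:Z + q * (m.+1)%:Z + 1 = 0 + (q + 1) * (m.+1)%:Z.
  rewrite rm [(_.+1)%:Z]intS; ring.
rewrite extE // rm.
idtac.
have -> : h 0 + (q + 1) * (n.+1)%:Z = (h 0 + (n.+1)%:Z) + q * (n.+1)%:Z by ring.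
by rewrite lerD2r.
Qed.

Lemma lam_ofE m n (f : 'I_m.+1 -> 'I_n.+1) (r : 'I_m.+1) (q : int) :
  lam_of f ((r : nat)%:Z + q * (m.+1)%:Z) = (f r : nat)%:Z + q * (n.+1)%:Z.
Proof.
have hr : 0 <= (r : nat)%:Z < (m.+1)%:Z by rewrite ltz_nat ltn_ord.
have := @extE m n.+1 (fun t => (f (inord (absz t)) : nat)%:Z) r q hr.
rewrite /ext /lam_of => ->; by rewrite /= inord_val.
Qed.

Lemma lam_of_hom m n (f : 'I_m.+1 -> 'I_n.+1) : dmono f -> lam_hom m n (lam_of f).
Proof.
move=> hf; apply: (@ext_hom m n (fun t => (f (inord (absz t)) : nat)%:Z)) => /=.
  move=> t ht; rewrite lez_nat; apply: hf.
  by rewrite !inordK // ltnS ltnW.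
rewrite -PoszD lez_nat; apply: leq_trans (leq_addl _ _); exact: ltnW (ltn_ord _).
Qed.

Lemma lam_of0 m n (f : 'I_m.+1 -> 'I_n.+1) (r : 'I_m.+1) :
  lam_of f (r : nat)%:Z = (f r : nat)%:Z.
Proof. by have := lam_ofE f r 0; rewrite !mul0r !addr0. Qed.

Theorem lemma4p2p8 (m m' n k : nat)
  (f : 'I_m.+1 -> 'I_n.+1) (f' : 'I_m'.+1 -> 'I_n.+1)
  (g : 'I_k.+1 -> 'I_m.+1) (g' : 'I_k.+1 -> 'I_m'.+1) :
  dmono f -> dmono f' -> left_active f -> left_active f' ->
  compatible f f' ->
  delta_pullback g g' f f' ->
  lam_pushout k m m' n (lam_of g) (lam_of g') (lam_of f) (lam_of f').
Proof.
move=> hf hf' la la' [bc1 bc2] [hg hg' hcomm hup].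
have pt : forall i i', f i = f' i' -> exists p, g p = i /\ g' p = i'.
  move=> i i' e.
  have [||u [_ hu hu' _]] := hup 0%N (fun _ => i) (fun _ => i') _ _ (fun _ => e).
  - by move=> ? ? _; rewrite leqnn.
  - by move=> ? ? _; rewrite leqnn.
  by exists (u ord0).
have cover : forall j : 'I_n.+1, (exists i, f i = j) \/ (exists i', f' i' = j).
  move=> j; have [j0|jpos] := posnP j.
    by left; exists ord0; apply: val_inj; rewrite /= la j0.
  case/orP: (bc2 j jpos) => /andP [_ /existsP [i /eqP h]].
    by left; exists i; apply: val_inj.
  by right; exists i; apply: val_inj.
split.
- by split; apply: lam_of_hom.
- exact: lam_of_hom.
- exact: lam_of_hom.
- exists 0 => i; have [r [q ->]] := decomp k i.
  by rewrite /= !lam_ofE hcomm mul0r addr0.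
move=> e x y hx hy [c hc].
set E := (e.+1)%:Z.
pose y1 := fun i => y i - c * E.
have hy1 : lam_hom m' e y1.
  case: hy => hm hp; split; first by move=> i j hij; rewrite /y1 lerD2r hm.
  by move=> i; rewrite /y1 hp; ring.
have P : forall i i', f i = f' i' -> x (i : nat)%:Z = y1 (i' : nat)%:Z.
  move=> i i' e0; have [p [<- <-]] := pt i i' e0.
  have := hc (p : nat)%:Z; rewrite /= !lam_of0 /y1 => ->; ring.
have Fib : forall i1 i2, f i1 = f i2 -> x (i1 : nat)%:Z = x (i2 : nat)%:Z.
  move=> i1 i2 e0; case/orP: (bc1 (f i1)) => /card1P [x0 hx0].
    move: (hx0 i1) (hx0 i2); rewrite !inE /= e0 eqxx.
    by move=> /esym/eqP -> /esym/eqP ->.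
  have := hx0 x0; rewrite !inE eqxx /= => /eqP h.
  by rewrite (P i1 x0) ?h // (P i2 x0) ?h.
have Fib' : forall i1 i2, f' i1 = f' i2 -> y1 (i1 : nat)%:Z = y1 (i2 : nat)%:Z.
  move=> i1 i2 e0; case/orP: (bc1 (f' i1)) => /card1P [x0 hx0]; last first.
    move: (hx0 i1) (hx0 i2); rewrite !inE /= e0 eqxx.
    by move=> /esym/eqP -> /esym/eqP ->.
  have := hx0 x0; rewrite !inE eqxx /= => /eqP h.
  by rewrite -(P x0 i1) ?h // -(P x0 i2) ?h.
pose z0 := fun j : int =>
  match [pick i | (f i : nat) == absz j] with
  | Some i => x (i : nat)%:Z
  | None => match [pick i | (f' i : nat) == absz j] with
            | Some i => y1 (i : nat)%:Z | None => 0 end end.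
have A : forall i, z0 (f i : nat)%:Z = x (i : nat)%:Z.
  move=> i; rewrite /z0; case: pickP => [i0 /eqP h|h].
    by apply: Fib; apply: val_inj.
  by have := h i; rewrite eqxx.
have B : forall i', z0 (f' i' : nat)%:Z = y1 (i' : nat)%:Z.
  move=> i'; rewrite /z0; case: pickP => [i0 /eqP h|_].
    by apply: P; apply: val_inj.
  case: pickP => [i1 /eqP h|h]; first by apply: Fib'; apply: val_inj.
  by have := h i'; rewrite eqxx.
have x0y0 : x 0 = y1 0.
  have := P ord0 ord0; apply; apply: val_inj; by rewrite /= la la'.
pose z := ext n.+1 e.+1 z0.
have hz : lam_hom n e z.
  apply: ext_hom.
    move=> t ht.
    case/orP: (bc2 (Ordinal (ht : (t.+1 < n.+1)%N)) isT) => /andP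
      [/existsP [i1 /eqP /= h1] /existsP [i2 /eqP /= h2]].
      rewrite -h2 -h1 !A; apply: hx.1; rewrite lez_nat leqNgt; apply/negP => lt.
      by have := hf _ _ (ltnW lt); rewrite h1 h2 /= ltnn.
    rewrite -h2 -h1 !B; apply: hy1.1; rewrite lez_nat leqNgt; apply/negP => lt.
    by have := hf' _ _ (ltnW lt); rewrite h1 h2 /= ltnn.
  have z00 : z0 0 = x 0 by have := A ord0; rewrite /= la.
  rewrite z00; case: (cover ord_max) => [[i hi]|[i hi]].
    have -> : (n%:Z) = (f i : nat)%:Z by rewrite hi.
    rewrite A; apply: (le_trans (hx.1 _ (0 + 1 * (m.+1)%:Z) _)).
      by rewrite add0r mul1r lez_nat ltnW.
    by rewrite (hom_shift hx) mul1r.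
  have -> : (n%:Z) = (f' i : nat)%:Z by rewrite hi.
  rewrite B x0y0; apply: (le_trans (hy1.1 _ (0 + 1 * (m'.+1)%:Z) _)).
    by rewrite add0r mul1r lez_nat ltnW.
  by rewrite (hom_shift hy1) mul1r.
have zF : forall i, z (lam_of f i) = x i.
  move=> i; have [r [q ->]] := decomp m i.
  rewrite lam_ofE /z extE ?A ?(hom_shift hx) //.
  by rewrite ltz_nat ltn_ord.
have zF' : forall i, z (lam_of f' i) = y1 i.
  move=> i; have [r [q ->]] := decomp m' i.
  rewrite lam_ofE /z extE ?B ?(hom_shift hy1) //.
  by rewrite ltz_nat ltn_ord.
exists z; split => //.
- by exists 0 => i; rewrite /= zF mul0r addr0.
- by exists c => i; rewrite /= zF' /y1; ring.
move=> z' hz' [a ha] [b hb].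
have hab : b = a + c.
  have := hc 0; rewrite /=.
  have := ha (lam_of g 0); have := hb (lam_of g' 0).
  have e1 : lam_of g 0 = (g ord0 : nat)%:Z by exact: (lam_of0 g ord0).
  have e2 : lam_of g' 0 = (g' ord0 : nat)%:Z by exact: (lam_of0 g' ord0).
  rewrite /= e1 e2 !lam_of0 hcomm => -> -> h.
  move: h; rewrite -addrA => /addrI h.
  apply: (mulIf (x := E)) => //; by rewrite mulrDl.
exists (-a) => j; have [r [q ->]] := decomp n j.
rewrite (hom_shift hz') /z extE; last by rewrite ltz_nat ltn_ord.
suff -> : z' (r : nat)%:Z = z0 (r : nat)%:Z - a * E by ring.
case: (cover r) => [[i <-]|[i <-]].
  by rewrite A -(lam_of0 f) (ha i); ring.
rewrite B -(lam_of0 f') /y1 (hb i) hab; ring.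
Qed.
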